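(* Let $\rho_x=\frac12(I+\vec v_x\cdot\vec\sigma)$, $x=1,\dots,N$, be qubit states with Bloch vectors $\vec v_x\in\mathbb R^3$, $\|\vec v_x\|\le1$, given with equal prior probabilities $1/N$. Let $\lambda^\ast=\sup\{\lambda\ge0:\ \exists\text{ an isometry } g \text{ of }\mathbb R^3 \text{ with } \|g(\lambda\vec v_x)\|\le 1\ \forall x\}$ (the scale of the largest copy, similar to the polytope with vertices $\vec v_x$, that fits in the Bloch ball), and let $r=1/(N\lambda^\ast)$ (with $r=0$ if $\lambda^\ast=\infty$), i.e. $r$ is the ratio of the trace-norm edge lengths of the polytope with vertices $\rho_x/N$ to those of its maximal similar polytope in the Bloch sphere. Then $$P_{\mathrm{guess}}=\frac1N+r .$$
   Context: $\vec\sigma=(X,Y,Z)$ are the Pauli matrices. $P_{\mathrm{guess}}=\max\sum_x\frac1N\mathrm{tr}[M_x\rho_x]$ over qubit POVMs $\{M_x\}_{x=1}^N$ (positive semidefinite operators summing to $I$). For qubits, the trace-norm distance between $\frac12(I+\vec a\cdot\vec\sigma)$-type operators with difference $\frac12(\vec a-\vec b)\cdot\vec\sigma$ equals the Euclidean distance $\|\vec a-\vec b\|$, so ratios of trace-norm edge lengths equal ratios of Euclidean edge lengths of Bloch-vector polytopes. *)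

(* Defs.v *)
From HB Require Import structures.
From mathcomp Require Import all_boot all_order all_algebra.
From mathcomp Require Import all_classical all_reals.
From mathcomp Require Import ereal complex.
Set Implicit Arguments. Unset Strict Implicit. Unset Printing Implicit Defensive.
Import Order.TTheory GRing.Theory Num.Theory.
Local Open Scope ring_scope.
Local Open Scope classical_set_scope.

Section QubitDefs.
Variable R : realType.
Local Notation C := (complex R).

Definition enorm (v : 'rV[R]_3) : R := Num.sqrt (\sum_(i < 3) v 0 i ^+ 2).

Definition isometry3 (g : 'rV[R]_3 -> 'rV[R]_3) : Prop :=
  forall a b, enorm (g a - g b) = enorm (a - b).

Definition RtoC (x : R) : C := Complex x 0.

Definition pauliX : 'M[C]_2 := delta_mx 0 1 + delta_mx 1 0.
Definition pauliY : 'M[C]_2 :=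
  (Complex 0 (-1)) *: delta_mx 0 1 + (Complex 0 1) *: delta_mx 1 0.
Definition pauliZ : 'M[C]_2 := delta_mx 0 0 - delta_mx 1 1.

Definition bloch_state (v : 'rV[R]_3) : 'M[C]_2 :=
  (RtoC (1/2)) *: (1%:M + RtoC (v 0 0) *: pauliX + RtoC (v 0 1) *: pauliY
                      + RtoC (v 0 2) *: pauliZ).

Definition adjmx m n (A : 'M[C]_(m, n)) : 'M[C]_(n, m) := (map_mx Num.conj A)^T.

Definition psd (A : 'M[C]_2) : Prop :=
  adjmx A = A /\ forall u : 'cV[C]_2, 0 <= (adjmx u *m A *m u) 0 0.

Definition povm N (M : 'I_N -> 'M[C]_2) : Prop :=
  (forall x, psd (M x)) /\ \sum_(x < N) M x = 1%:M.

Definition success N (M : 'I_N -> 'M[C]_2) (v : 'I_N -> 'rV[R]_3) : C :=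
  RtoC (N%:R^-1) * \sum_(x < N) \tr (M x *m bloch_state (v x)).

Definition is_Pguess N (v : 'I_N -> 'rV[R]_3) (P : R) : Prop :=
  (exists M, povm M /\ success M v = RtoC P) /\
  (forall M, povm M -> success M v <= RtoC P).

Definition fit_scales N (v : 'I_N -> 'rV[R]_3) : set R :=
  [set l | 0 <= l /\ exists g, isometry3 g /\ forall x, enorm (g (l *: v x)) <= 1].

Definition lambda_star N (v : 'I_N -> 'rV[R]_3) : \bar R :=
  ereal_sup (EFin @` fit_scales v).

Definition ratio_r N (v : 'I_N -> 'rV[R]_3) : R :=
  match lambda_star v with
  | EFin l => (N%:R * l)^-1
  | _ => 0
  end.

End QubitDefs.

(* Main.v *)
Require Import Defs.
From HB Require Import structures.
From mathcomp Require Import all_boot all_order all_algebra.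
From mathcomp Require Import all_classical all_reals all_analysis.
From mathcomp Require Import complex.
From mathcomp Require Import ring lra.
Import Order.TTheory GRing.Theory Num.Theory.
Import numFieldNormedType.Exports.
Set Implicit Arguments. Unset Strict Implicit. Unset Printing Implicit Defensive.
Local Open Scope ring_scope.
Local Open Scope classical_set_scope.
Section Vec.
Variable R : realType.
Implicit Types u w : 'rV[R]_3.
Lemma sum3 (F : 'I_3 -> R) : \sum_(i < 3) F i = F 0 + F 1 + F 2.
Proof. rewrite !big_ord_recr big_ord0 /= add0r; congr (F _ + F _ + F _); exact: val_inj. Qed.
Definition dot (u w : 'rV[R]_3) := \sum_(i < 3) u 0 i * w 0 i.
Lemma dotE u w : dot u w = u 0 0 * w 0 0 + u 0 1 * w 0 1 + u 0 2 * w 0 2.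
Proof. exact: sum3. Qed.
Lemma enormE u : enorm u = Num.sqrt (dot u u).
Proof. by rewrite /enorm /dot; apply: congr1; apply: eq_bigr => i _; rewrite expr2. Qed.
Lemma dot_ge0 u : 0 <= dot u u.
Proof. rewrite dotE; nra. Qed.
Lemma enorm_ge0 u : 0 <= enorm u.
Proof. by rewrite enormE sqrtr_ge0. Qed.
Lemma enorm_sq u : enorm u ^+ 2 = dot u u.
Proof. by rewrite enormE sqr_sqrtr // dot_ge0. Qed.
Lemma CS u w : dot u w <= enorm u * enorm w.
Proof.
rewrite !enormE -sqrtrM ?dot_ge0 //.
apply: (le_trans (ler_norm _)).
rewrite -sqrtr_sqr ler_sqrt; last by apply: mulr_ge0; apply dot_ge0.
rewrite !dotE.
set a := u 0 0; set b := u 0 1; set c := u 0 2; set d := w 0 0; set e := w 0 1; set f := w 0 2.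
have -> : (a * a + b * b + c * c) * (d * d + e * e + f * f) =
  (a * d + b * e + c * f) ^+ 2 + ((a*e - b*d)^+2 + (a*f - c*d)^+2 + (b*f - c*e)^+2) by ring.
rewrite lerDl; apply: addr_ge0; [apply: addr_ge0|]; apply: sqr_ge0.
Qed.
Lemma dotC u w : dot u w = dot w u.
Proof. rewrite !dotE; ring. Qed.
Lemma dotDl u u' w : dot (u + u') w = dot u w + dot u' w.
Proof. rewrite !dotE !mxE; ring. Qed.
Lemma dotDr u w w' : dot u (w + w') = dot u w + dot u w'.
Proof. rewrite !dotE !mxE; ring. Qed.
Lemma dotBl u u' w : dot (u - u') w = dot u w - dot u' w.
Proof. rewrite !dotE !mxE; ring. Qed.
Lemma dotBr u w w' : dot u (w - w') = dot u w - dot u w'.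
Proof. rewrite !dotE !mxE; ring. Qed.
Lemma dotZl k u w : dot (k *: u) w = k * dot u w.
Proof. rewrite !dotE !mxE; ring. Qed.
Lemma dotZr k u w : dot u (k *: w) = k * dot u w.
Proof. rewrite !dotE !mxE; ring. Qed.
Lemma dot0l w : dot 0 w = 0.
Proof. rewrite !dotE !mxE; ring. Qed.
Lemma dot0r w : dot w 0 = 0.
Proof. rewrite !dotE !mxE; ring. Qed.
Lemma dot_suml (I : Type) (r : seq I) (P : pred I) (F : I -> 'rV[R]_3) w :
  dot (\sum_(i <- r | P i) F i) w = \sum_(i <- r | P i) dot (F i) w.
Proof.
elim: r => [|i r IH]; first by rewrite !big_nil dot0l.
rewrite !big_cons; case: (P i) => //; by rewrite dotDl IH.
Qed.
Lemma dot_sumr (I : Type) (r : seq I) (P : pred I) (F : I -> 'rV[R]_3) w :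
  dot w (\sum_(i <- r | P i) F i) = \sum_(i <- r | P i) dot w (F i).
Proof. rewrite dotC dot_suml; apply: eq_bigr => i _; exact: dotC. Qed.
Lemma enormZ k u : enorm (k *: u) = `|k| * enorm u.
Proof.
rewrite !enormE dotZl dotZr mulrA -expr2 sqrtrM ?sqr_ge0 //.
by rewrite sqrtr_sqr.
Qed.
Lemma enorm0 : enorm (0 : 'rV[R]_3) = 0.
Proof. by rewrite enormE dot0l sqrtr0. Qed.
Lemma polar u w : 2 * dot u w = dot u u + dot w w - dot (u - w) (u - w).
Proof. rewrite !dotE !mxE; ring. Qed.
Lemma dotNr u w : dot u (- w) = - dot u w.
Proof. rewrite !dotE !mxE; ring. Qed.
Lemma dotNl u w : dot (- u) w = - dot u w.
Proof. rewrite !dotE !mxE; ring. Qed.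

Lemma iso_bound N (v : 'I_N -> 'rV[R]_3) g (hg : isometry3 g) (l : R)
  (hfit : forall x, enorm (g (l *: v x)) <= 1) (m : 'I_N -> R) (a : 'I_N -> 'rV[R]_3)
  (ha : forall x, enorm (a x) <= m x) (hm : \sum_x m x = 2) (hsa : \sum_x a x = 0) :
  \sum_x dot (a x) (l *: v x) <= 2.
Proof.
pose h z := g z - g 0.
have hn z : dot (h z) (h z) = dot z z by rewrite -!enorm_sq /h hg subr0.
have hd z w : dot (h z - h w) (h z - h w) = dot (z - w) (z - w).
  by rewrite /h opprB addrA subrK -!enorm_sq hg.
have hp z w : dot (h z) (h w) = dot z w.
  apply: (@mulfI _ 2); first by rewrite pnatr_eq0.
  by rewrite !polar hn hn hd.
have hB : dot (\sum_x h (a x)) (\sum_x h (a x)) = 0.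
  have E : dot (\sum_x a x) (\sum_x a x) = \sum_x \sum_y dot (a x) (a y).
    by rewrite dot_suml; apply: eq_bigr => x _; rewrite dot_sumr.
  rewrite hsa dot0l in E; rewrite E dot_suml; apply: eq_bigr => x _; rewrite dot_sumr.
  by apply: eq_bigr => y _; rewrite hp.
have hB0 : dot (\sum_x h (a x)) (g 0) = 0.
  have eB : enorm (\sum_x h (a x)) = 0 by rewrite enormE hB sqrtr0.
  apply/eqP; rewrite eq_le; apply/andP; split.
    by apply: (le_trans (CS _ _)); rewrite eB mul0r.
  by rewrite -oppr_le0 -dotNr; apply: (le_trans (CS _ _)); rewrite eB mul0r.
have -> : \sum_x dot (a x) (l *: v x) =
    \sum_x dot (h (a x)) (g (l *: v x)) - dot (\sum_x h (a x)) (g 0).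
  rewrite dot_suml -sumrB; apply: eq_bigr => x _.
  by rewrite -dotBr -hp.
rewrite hB0 subr0 -hm; apply: ler_sum => x _.
apply: (le_trans (CS _ _)).
have -> : enorm (h (a x)) = enorm (a x) by rewrite !enormE hn.
rewrite -[leRHS]mulr1; apply: ler_pM => //; exact: enorm_ge0.
Qed.
End Vec.

Section MEB.
Unset Implicit Arguments.
Variable R : realType.
Variable N : nat.
Variable v : 'I_N -> 'rV[R]_3.

Lemma cont_sum (I : Type) (r : seq I) (F : I -> 'rV[R]_N -> R) :
  (forall i, continuous (F i)) -> continuous (fun w => \sum_(i <- r) F i w).
Proof.
move=> H; elim: r => [|i r IH].
  under eq_fun do rewrite big_nil. exact: cst_continuous.
under eq_fun do rewrite big_cons.
move=> w; apply: (@continuousD _ _ _ (F i) (fun w => \sum_(j <- r) F j w)); [exact: H | exact: IH].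
Qed.
Lemma cont_coord i : continuous (fun w : 'rV[R]_N => w 0 i).
Proof. exact: coord_continuous. Qed.
Lemma cont_mul (f g : 'rV[R]_N -> R) : continuous f -> continuous g -> continuous (fun w => f w * g w).
Proof. move=> hf hg w; exact: (continuousM (hf w) (hg w)). Qed.
Lemma cont_add (f g : 'rV[R]_N -> R) : continuous f -> continuous g -> continuous (fun w => f w + g w).
Proof. move=> hf hg w; exact: (continuousD (hf w) (hg w)). Qed.
Lemma cont_sub (f g : 'rV[R]_N -> R) : continuous f -> continuous g -> continuous (fun w => f w - g w).
Proof. move=> hf hg w; exact: (continuousB (hf w) (hg w)). Qed.
Arguments cont_mul {f g}. Arguments cont_add {f g}. Arguments cont_sub {f g}.
Lemma cont_cst (k : R) : continuous (fun w : 'rV[R]_N => k).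
Proof. exact: cst_continuous. Qed.

Definition simplex : set 'rV[R]_N := [set w | (forall i, 0 <= w 0 i) /\ \sum_i w 0 i = 1].
Lemma simplex_compact : compact simplex.
Proof.
have cube : compact [set w : 'rV[R]_N | forall i, `[0, 1]%classic (w ord0 i)].
  have := @rV_compact R N (fun=> `[0, 1]%classic).
  apply. by move=> _; apply: segment_compact.
apply: (subclosed_compact _ cube).
  have -> : simplex = (\bigcap_(i in setT) ((fun w : 'rV[R]_N => w 0 i) @^-1` [set x | 0 <= x]))
      `&` ((fun w : 'rV[R]_N => \sum_i w 0 i) @^-1` [set x | x = 1]).
    apply/seteqP; split => w /= [H1 H2]; split => //.
      by move=> i _; exact: H1.
    by move=> i; exact: (H1 i I).
  apply: closedI.
    apply: closed_bigI => i _; apply: preimage_closed; last exact: closed_ge.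
    by move=> w _; apply: cont_coord.
  apply: preimage_closed; last exact: closed_eq.
  move=> w _; exact: (@cont_sum _ (index_enum _) (fun i w => w 0 i) (fun i => cont_coord i) w).
move=> w [H1 H2] i /=; rewrite in_itv /= H1 /=.
rewrite -H2 (bigD1 i) //= lerDl sumr_ge0 //.
Qed.

Definition S x := dot (v x) (v x).
Definition cv (w : 'rV[R]_N) : 'rV[R]_3 := \sum_x w 0 x *: v x.
Definition phi (w : 'rV[R]_N) := \sum_x w 0 x * S x - dot (cv w) (cv w).

Lemma cv_coord w k : cv w 0 k = \sum_x w 0 x * v x 0 k.
Proof. by rewrite /cv summxE; apply: eq_bigr => x _; rewrite mxE. Qed.

Lemma phi_cont : continuous phi.
Proof.
pose cc k (w : 'rV[R]_N) := \sum_x w 0 x * v x 0 k.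
have ccc k : continuous (cc k).
  exact: (@cont_sum _ (index_enum _) (fun x w => w 0 x * v x 0 k)
            (fun x => cont_mul (cont_coord x) (cont_cst _))).
have -> : phi = fun w => \sum_x w 0 x * S x - (cc 0 w * cc 0 w + cc 1 w * cc 1 w + cc 2 w * cc 2 w).
  by apply: funext => w; rewrite /phi dotE !cv_coord.
apply: cont_sub.
  exact: (@cont_sum _ (index_enum _) (fun x w => w 0 x * S x)
            (fun x => cont_mul (cont_coord x) (cont_cst _))).
by apply: cont_add; [apply: cont_add|]; apply: cont_mul.
Qed.
Lemma sum_ind (F : 'I_N -> R) (x : 'I_N) : \sum_z (x == z)%:R * F z = F x.
Proof.
rewrite (bigD1 x) //= eqxx mul1r big1 ?addr0 // => z /negbTE.
by rewrite eq_sym => ->; rewrite mul0r.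
Qed.
Lemma sum_ind1 (x : 'I_N) : \sum_z ((x == z)%:R : R) = 1.
Proof. have := sum_ind (fun _ => 1) x; under eq_bigr do rewrite mulr1; done. Qed.
Lemma sum_indv (F : 'I_N -> 'rV[R]_3) (x : 'I_N) : \sum_z ((x == z)%:R : R) *: F z = F x.
Proof.
rewrite (bigD1 x) //= eqxx scale1r big1 ?addr0 // => z /negbTE.
by rewrite eq_sym => ->; rewrite scale0r.
Qed.

Definition G w z := S z - 2 * dot (cv w) (v z).

Lemma kkt w : simplex w -> (forall w', simplex w' -> phi w' <= phi w) ->
  forall x y, 0 < w 0 y -> G w x <= G w y.
Proof.
move=> [w0 w1] wmax x y wy; rewrite leNgt; apply/negP => lt.
set d := G w x - G w y.
have dpos : 0 < d by rewrite subr_gt0.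
set D := dot (v x - v y) (v x - v y).
have D0 : 0 <= D := dot_ge0 _.
set t := Order.min (w 0 y) (d / (2 * (D + 1))).
have D1 : 0 < 2 * (D + 1) by lra.
have tpos : 0 < t by rewrite lt_min wy /= divr_gt0.
have tle : t <= w 0 y by rewrite ge_min lexx.
have tle2 : t * (2 * (D + 1)) <= d.
  by rewrite -ler_pdivlMr // ge_min lexx orbT.
have hxy : x != y.
  by apply/eqP => exy; move: dpos; rewrite /d exy subrr ltxx.
pose w' := \row_z (w 0 z + t * ((x == z)%:R - (y == z)%:R)) : 'rV[R]_N.
have w'E z : w' 0 z = w 0 z + t * ((x == z)%:R - (y == z)%:R) by rewrite mxE.
have sw' : simplex w'.
  split.
    move=> z; rewrite w'E; case: (eqVneq y z) => [<-|nyz].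
      rewrite (negbTE hxy) /=; lra.
    case: (x == z) => /=; have := w0 z; lra.
  under eq_bigr do rewrite w'E.
  rewrite big_split /= -mulr_sumr sumrB !sum_ind1 w1; lra.
have Lf : \sum_z w' 0 z * S z = \sum_z w 0 z * S z + t * (S x - S y).
  under eq_bigr do rewrite w'E mulrDl.
  rewrite big_split /=; congr (_ + _).
  under eq_bigr do rewrite -mulrA mulrBl.
  by rewrite -mulr_sumr sumrB !sum_ind.
have cvE : cv w' = cv w + t *: (v x - v y).
  rewrite /cv; under eq_bigr do rewrite w'E scalerDl.
  rewrite big_split /=; congr (_ + _).
  under eq_bigr do rewrite -scalerA scalerBl.
  by rewrite -scaler_sumr sumrB !sum_indv.
have key : phi w' = phi w + t * d - t ^+ 2 * D.
  rewrite /phi Lf cvE /d /G /D !dotDl !dotDr !dotZl !dotZr !dotBl !dotBr.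
  rewrite ?dotNr ?dotNl (dotC (v x) (cv w)) (dotC (v y) (cv w)) (dotC (v y) (v x)); ring.
have := wmax w' sw'; rewrite key => H.
nra.
Qed.
Lemma meb (hN : (0 < N)%N) : exists (mu : 'I_N -> R) (c : 'rV[R]_3) (Rr : R),
  [/\ (forall x, 0 <= mu x), \sum_x mu x = 1, c = \sum_x mu x *: v x,
      (forall x, enorm (v x - c) <= Rr) & (forall x, 0 < mu x -> enorm (v x - c) = Rr)].
Proof.
pose x0 := Ordinal hN.
have ne : simplex !=set0.
  exists (\row_z ((x0 == z)%:R : R)); split.
    by move=> z; rewrite mxE ler0n.
  by under eq_bigr do rewrite mxE; rewrite sum_ind1.
have cphi : {within simplex, continuous phi} by apply: continuous_subspaceT; exact: phi_cont.
have [w ws wmax] := compact_EVT_max ne simplex_compact cphi.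
have ws' : simplex w by rewrite inE in ws.
have wmax' : forall w', simplex w' -> phi w' <= phi w.
  by move=> w' hw'; apply: wmax; rewrite inE.
have [y0 hy0] : exists y, 0 < w 0 y.
  case: (pselect (exists y, 0 < w 0 y)) => // hne; exfalso.
  have : \sum_y w 0 y <= 0.
    apply: sumr_le0 => y _; rewrite leNgt; apply/negP => h; apply: hne; by exists y.
  by case: ws' => _ ->; rewrite ler10.
have dE : forall x, dot (v x - cv w) (v x - cv w) = G w x + dot (cv w) (cv w).
  by move=> x; rewrite /G /S !dotBl !dotBr (dotC (v x) (cv w)); ring.
exists (fun x => w 0 x), (cv w), (enorm (v y0 - cv w)); split.
- by case: ws'.
- by case: ws'.
- by [].
- move=> x; rewrite !enormE ler_sqrt ?dot_ge0 // !dE lerD2r.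
  exact: (kkt _ ws' wmax' x y0 hy0).
- move=> x hx; rewrite !enormE !dE; congr (Num.sqrt (_ + _)).
  apply/eqP; rewrite eq_le (kkt _ ws' wmax' x y0 hy0) (kkt _ ws' wmax' y0 x hx) //.
Qed.
End MEB.

Set Implicit Arguments.
Section Q.
Variable R : realType.
Local Notation C := (complex R).
Implicit Types (M : 'M[C]_2) (v w : 'rV[R]_3).
Definition re (z : C) : R := let: Complex a _ := z in a.
Definition im (z : C) : R := let: Complex _ b := z in b.

Lemma bl00 v : bloch_state v 0 0 = Complex ((1 + v 0 2)/2) 0.
Proof. by rewrite /bloch_state /pauliX /pauliY /pauliZ !mxE /= /RtoC; simpc; rewrite mulrC. Qed.
Lemma bl11 v : bloch_state v 1 1 = Complex ((1 - v 0 2)/2) 0.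
Proof. rewrite /bloch_state /pauliX /pauliY /pauliZ !mxE /= /RtoC; simpc; apply/eqP; rewrite eq_complex /=; apply/andP; split; apply/eqP; ring. Qed.
Lemma bl01 v : bloch_state v 0 1 = Complex (v 0 0 / 2) (- (v 0 1 / 2)).
Proof. rewrite /bloch_state /pauliX /pauliY /pauliZ !mxE /= /RtoC; simpc; apply/eqP; rewrite eq_complex /=; apply/andP; split; apply/eqP; ring. Qed.
Lemma bl10 v : bloch_state v 1 0 = Complex (v 0 0 / 2) (v 0 1 / 2).
Proof. rewrite /bloch_state /pauliX /pauliY /pauliZ !mxE /= /RtoC; simpc; apply/eqP; rewrite eq_complex /=; apply/andP; split; apply/eqP; ring. Qed.
Lemma conjE (a b : R) : Num.conj (Complex a b) = Complex a (- b).
Proof. by []. Qed.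

Lemma adjE M i j : adjmx M i j = Num.conj (M j i).
Proof. by rewrite /adjmx !mxE. Qed.

Lemma adjE' m n (A : 'M[C]_(m, n)) i j : adjmx A i j = Num.conj (A j i).
Proof. by rewrite /adjmx !mxE. Qed.

Lemma herm M : adjmx M = M ->
  [/\ M 0 0 = Complex (re (M 0 0)) 0, M 1 1 = Complex (re (M 1 1)) 0
    & M 1 0 = Complex (re (M 0 1)) (- im (M 0 1))].
Proof.
move=> H; have h i j : Num.conj (M j i) = M i j by rewrite -adjE H.
split.
- move: (h 0 0); case: (M 0 0) => a b; rewrite conjE => -[E]; congr Complex; lra.
- move: (h 1 1); case: (M 1 1) => a b; rewrite conjE => -[E]; congr Complex; lra.
- by rewrite -h; case: (M 0 1) => a b.
Qed.

Lemma tr2 (A B : 'M[C]_2) :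
  \tr (A *m B) = A 0 0 * B 0 0 + A 0 1 * B 1 0 + (A 1 0 * B 0 1 + A 1 1 * B 1 1).
Proof.
rewrite /mxtrace !big_ord_recr big_ord0 /= add0r !mxE !big_ord_recr !big_ord0 /= !add0r.
have e0 : widen_ord (leqnSn 1) ord_max = 0 :> 'I_2 by apply: val_inj.
have e1 : (ord_max : 'I_2) = 1 by apply: val_inj.
by rewrite e0 e1.
Qed.

Definition mm M := re (M 0 0) + re (M 1 1).
Definition av M : 'rV[R]_3 := \row_(i < 3)
  (if i == 0 :> nat then 2 * re (M 0 1) else if i == 1 :> nat then - (2 * im (M 0 1))
   else re (M 0 0) - re (M 1 1)).
Lemma dot_av M v : dot (av M) v =
  2 * re (M 0 1) * v 0 0 - 2 * im (M 0 1) * v 0 1 + (re (M 0 0) - re (M 1 1)) * v 0 2.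
Proof. rewrite dotE !mxE /=; ring. Qed.

Lemma tr_bloch M v : adjmx M = M ->
  \tr (M *m bloch_state v) = RtoC ((mm M + dot (av M) v) / 2).
Proof.
move=> /herm [h0 h1 h2]; rewrite tr2 h0 h1 h2 bl00 bl01 bl10 bl11 dot_av /mm /RtoC.
case: (M 0 1) => a b /=.
set p := re (M 0 0); set s := re (M 1 1).
simpc; apply/eqP; rewrite eq_complex /=; apply/andP; split; apply/eqP; ring.
Qed.

Lemma qf M (u : 'cV[C]_2) : (adjmx u *m M *m u) 0 0 =
  Num.conj (u 0 0) * (M 0 0 * u 0 0 + M 0 1 * u 1 0) +
  Num.conj (u 1 0) * (M 1 0 * u 0 0 + M 1 1 * u 1 0).
Proof.
rewrite !mxE !big_ord_recr !big_ord0 /= !add0r !mxE !big_ord_recr !big_ord0 /= !add0r !adjE'.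
have e0 : widen_ord (leqnSn 1) ord_max = 0 :> 'I_2 by apply: val_inj.
have e1 : (ord_max : 'I_2) = 1 by apply: val_inj.
rewrite e0 e1; ring.
Qed.

Definition Qf (p s qr qi x1 x2 y1 y2 : R) :=
  p * (x1 ^+ 2 + x2 ^+ 2) + s * (y1 ^+ 2 + y2 ^+ 2) + 2 * (x1 * (qr * y1 - qi * y2) + x2 * (qr * y2 + qi * y1)).

Lemma qf_herm M (u : 'cV[C]_2) : adjmx M = M ->
  (adjmx u *m M *m u) 0 0 = RtoC (Qf (re (M 0 0)) (re (M 1 1)) (re (M 0 1)) (im (M 0 1))
     (re (u 0 0)) (im (u 0 0)) (re (u 1 0)) (im (u 1 0))).
Proof.
move=> /herm [h0 h1 h2]; rewrite qf h0 h1 h2 /Qf /RtoC.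
set p := re (M 0 0); set s := re (M 1 1).
case: (M 0 1) => a b; case: (u 0 0) => x1 x2; case: (u 1 0) => y1 y2 /=.
rewrite !conjE; simpc; apply/eqP; rewrite eq_complex /=; apply/andP; split; apply/eqP; ring.
Qed.

Lemma Qpos p s qr qi x1 x2 y1 y2 : 0 <= p -> 0 <= s -> qr ^+ 2 + qi ^+ 2 <= p * s ->
  0 <= Qf p s qr qi x1 x2 y1 y2.
Proof.
move=> hp hs hq; rewrite /Qf.
have key : p * Qf p s qr qi x1 x2 y1 y2 = (p * x1 + qr * y1 - qi * y2) ^+ 2
   + (p * x2 + qr * y2 + qi * y1) ^+ 2 + (p * s - (qr ^+ 2 + qi ^+ 2)) * (y1 ^+ 2 + y2 ^+ 2).
  by rewrite /Qf; ring.
rewrite -/(Qf p s qr qi x1 x2 y1 y2).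
case: (ltrP 0 p) => hp0.
  rewrite -(pmulr_rge0 _ hp0) key.
  apply: addr_ge0; first by apply: addr_ge0; apply: sqr_ge0.
  by apply: mulr_ge0; [rewrite subr_ge0 | apply: addr_ge0; apply: sqr_ge0].
have p0 : p = 0 by apply/eqP; rewrite eq_le hp0 hp.
rewrite p0 mul0r in hq.
have qr0 : qr = 0 by nra.
have qi0 : qi = 0 by nra.
rewrite /Qf p0 qr0 qi0; nra.
Qed.

Lemma psd_of M : adjmx M = M -> 0 <= re (M 0 0) -> 0 <= re (M 1 1) ->
  re (M 0 1) ^+ 2 + im (M 0 1) ^+ 2 <= re (M 0 0) * re (M 1 1) -> psd M.
Proof.
move=> H hp hs hq; split => // u; rewrite qf_herm // /RtoC.
have := Qpos (re (u 0 0)) (im (u 0 0)) (re (u 1 0)) (im (u 1 0)) hp hs hq.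
by rewrite -ler0c.
Qed.

Lemma psd_facts M : psd M -> [/\ adjmx M = M, 0 <= mm M & enorm (av M) <= mm M].
Proof.
move=> [H Hu].
have Q x1 x2 y1 y2 : 0 <= Qf (re (M 0 0)) (re (M 1 1)) (re (M 0 1)) (im (M 0 1)) x1 x2 y1 y2.
  have := Hu (\col_(i < 2) (if i == 0 :> nat then Complex x1 x2 else Complex y1 y2)).
  by rewrite qf_herm // !mxE /= /RtoC ler0c.
set p := re (M 0 0) in Q *; set s := re (M 1 1) in Q *.
set a := re (M 0 1) in Q *; set b := im (M 0 1) in Q *.
have hp : 0 <= p by have := Q 1 0 0 0; rewrite /Qf; nra.
have hs : 0 <= s by have := Q 0 0 1 0; rewrite /Qf; nra.
have hq : a ^+ 2 + b ^+ 2 <= p * s.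
  case: (ltrP 0 s) => hs0.
    have := Q s 0 (- a) b; rewrite /Qf => h.
    have : 0 <= s * (p * s - (a ^+ 2 + b ^+ 2)) by nra.
    by rewrite pmulr_rge0 // subr_ge0.
  have s0 : s = 0 by apply/eqP; rewrite eq_le hs0 hs.
  set K := a ^+ 2 + b ^+ 2.
  have K0 : 0 <= K by rewrite /K; nra.
  set e := K / (p + 1).
  have he : e * (p + 1) = K by rewrite /e divfK //; apply/lt0r_neq0; lra.
  have h := Q e 0 (- a) b.
  have E1 : Qf p s a b e 0 (- a) b = - (e ^+ 2 * (p + 2)).
    rewrite /Qf s0.
    have -> : - (e ^+ 2 * (p + 2)) = p * e ^+ 2 - 2 * e * (e * (p + 1)) by ring.
    rewrite he /K; ring.
  rewrite E1 in h.
  have : e = 0.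
    have : e ^+ 2 * (p + 2) <= 0 by lra.
    move=> h3; apply/eqP; rewrite -sqrf_eq0; apply/eqP.
    have : 0 <= e ^+ 2 := sqr_ge0 e.
    nra.
  move=> e0; rewrite e0 mul0r in he; rewrite s0 mulr0 -he; lra.
have hmm : 0 <= mm M by rewrite /mm -/p -/s; lra.
split => //.
rewrite enormE -(ger0_norm hmm) -sqrtr_sqr ler_sqrt ?sqr_ge0 //.
rewrite dot_av !mxE /= /mm -/p -/s -/a -/b; nra.
Qed.

Lemma ord2E (i : 'I_2) : i = 0 \/ i = 1.
Proof. by case: i => [[|[|//]] h]; [left|right]; apply: val_inj. Qed.

Lemma mx2eq (A B : 'M[C]_2) : A 0 0 = B 0 0 -> A 0 1 = B 0 1 -> A 1 0 = B 1 0 ->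
  A 1 1 = B 1 1 -> A = B.
Proof.
move=> h00 h01 h10 h11; apply/matrixP => i j.
by case: (ord2E i) => ->; case: (ord2E j) => ->.
Qed.

Lemma scE (k : R) M i j : (RtoC k *: M) i j = RtoC k * M i j.
Proof. by rewrite mxE. Qed.

Lemma dot_le1 w : enorm w <= 1 -> dot w w <= 1.
Proof. move=> h; rewrite -enorm_sq; have := enorm_ge0 w; nra. Qed.

Lemma psd_bloch (k : R) w : 0 <= k -> enorm w <= 1 -> psd (RtoC k *: bloch_state w).
Proof.
move=> hk hw; have := dot_le1 hw; rewrite dotE => hw2.
apply: psd_of.
- apply: mx2eq; rewrite !adjE' !(scE k) ?bl00 ?bl01 ?bl10 ?bl11 /RtoC; simpc; rewrite ?conjE; simpc;
    apply/eqP; rewrite eq_complex /=; apply/andP; split; apply/eqP; ring.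
- rewrite (scE k) bl00 /RtoC; simpc => /=; nra.
- rewrite (scE k) bl11 /RtoC; simpc => /=; nra.
- rewrite !(scE k) bl00 bl01 bl11 /RtoC; simpc => /=; nra.
Qed.

Lemma mm_bloch (k : R) w : mm (RtoC k *: bloch_state w) = k.
Proof. rewrite /mm !(scE k) bl00 bl11 /RtoC; simpc => /=; field; rewrite ?pnatr_eq0 //. Qed.

Lemma av_bloch (k : R) w : av (RtoC k *: bloch_state w) = k *: w.
Proof.
apply/matrixP => i j; rewrite (ord1 i) !mxE.
have : (j = 0 \/ j = 1) \/ j = 2.
  case: j => [[|[|[|//]]] h]; [left; left|left; right|right]; apply: val_inj => //.
case=> [[]|] ->; rewrite /=; field; rewrite ?pnatr_eq0 //.
Qed.

Lemma re_sum (I : Type) (r : seq I) (P : pred I) (F : I -> C) :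
  re (\sum_(i <- r | P i) F i) = \sum_(i <- r | P i) re (F i).
Proof.
elim: r => [|i r IH]; first by rewrite !big_nil.
rewrite !big_cons; case: (P i) => //; rewrite -IH.
by case: (F i) => a b; case: (\sum_(j <- r | P j) F j).
Qed.
Lemma im_sum (I : Type) (r : seq I) (P : pred I) (F : I -> C) :
  im (\sum_(i <- r | P i) F i) = \sum_(i <- r | P i) im (F i).
Proof.
elim: r => [|i r IH]; first by rewrite !big_nil.
rewrite !big_cons; case: (P i) => //; rewrite -IH.
by case: (F i) => a b; case: (\sum_(j <- r | P j) F j).
Qed.
Lemma RtoC_sum (I : Type) (r : seq I) (P : pred I) (F : I -> R) :
  RtoC (\sum_(i <- r | P i) F i) = \sum_(i <- r | P i) RtoC (F i).
Proof.
elim: r => [|i r IH]; first by rewrite !big_nil.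
rewrite !big_cons; case: (P i) => //; rewrite -IH /RtoC; simpc; congr Complex.
Qed.
Lemma RtoC_mul (a b : R) : RtoC (a * b) = RtoC a * RtoC b.
Proof. by rewrite /RtoC; simpc. Qed.

Lemma povm_sums N (M : 'I_N -> 'M[C]_2) : povm M ->
  \sum_x mm (M x) = 2 /\ \sum_x av (M x) = 0.
Proof.
move=> [_ hs].
have e i j : \sum_x M x i j = (1%:M : 'M[C]_2) i j by rewrite -hs summxE.
split.
  rewrite /mm big_split /= -!re_sum (e 0 0) (e 1 1) !mxE /=.
  by rewrite /re /=.
apply/matrixP => i j; rewrite (ord1 i) summxE !mxE.
have : (j = 0 \/ j = 1) \/ j = 2.
  case: j => [[|[|[|//]]] h]; [left; left|left; right|right]; apply: val_inj => //.
case=> [[]|] -> /=; under eq_bigr do rewrite mxE /=.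
- by rewrite -mulr_sumr -re_sum (e 0 1) mxE /= mulr0.
- by rewrite sumrN -mulr_sumr -im_sum (e 0 1) mxE /= mulr0 oppr0.
- by rewrite sumrB -!re_sum (e 0 0) (e 1 1) !mxE /= subrr.
Qed.

Lemma success_eq N (M : 'I_N -> 'M[C]_2) (v : 'I_N -> 'rV[R]_3) : (forall x, adjmx (M x) = M x) ->
  success M v = RtoC (N%:R^-1 * \sum_x ((mm (M x) + dot (av (M x)) (v x)) / 2)).
Proof.
move=> h; rewrite /success RtoC_mul RtoC_sum; congr (_ * _).
by apply: eq_bigr => x _; rewrite tr_bloch.
Qed.
End Q.

Set Implicit Arguments.
Section Fin.
Variable R : realType.
Local Notation C := (complex R).

Lemma sumC (I : Type) (r : seq I) (k a b : I -> R) :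
  \sum_(i <- r) RtoC (k i) * Complex (a i) (b i) =
  Complex (\sum_(i <- r) k i * a i) (\sum_(i <- r) k i * b i).
Proof.
elim: r => [|i r IH]; first by rewrite !big_nil.
by rewrite !big_cons IH /RtoC; simpc.
Qed.

Lemma coord_sum N (F : 'I_N -> 'rV[R]_3) j : (\sum_x F x) 0 j = \sum_x F x 0 j.
Proof. by rewrite summxE. Qed.

Lemma sum_bloch N (k : 'I_N -> R) (w : 'I_N -> 'rV[R]_3) :
  \sum_x k x = 2 -> \sum_x k x *: w x = 0 ->
  \sum_x RtoC (k x) *: bloch_state (w x) = 1%:M.
Proof.
move=> hk hw.
have hc j : \sum_x k x * w x 0 j = 0.
  have h := congr1 (fun A : 'rV[R]_3 => A 0 j) hw; rewrite /= summxE mxE in h.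
  by apply: (etrans _ h); apply: eq_bigr => x _; rewrite mxE.
have hk2 : \sum_x k x * 2^-1 = 1 by rewrite -mulr_suml hk mulfV // pnatr_eq0.
apply: mx2eq; rewrite !summxE !mxE /=.
- under eq_bigr => x _ do rewrite (scE (k x)) bl00.
  rewrite sumC; congr Complex; last by rewrite big1 // => x _; rewrite mulr0.
  under eq_bigr do rewrite mulrA mulrDr mulr1 mulrDl.
  by rewrite big_split /= hk2 -mulr_suml hc mul0r addr0.
- under eq_bigr => x _ do rewrite (scE (k x)) bl01.
  rewrite sumC; congr Complex.
    by under eq_bigr do rewrite mulrA; rewrite -mulr_suml hc mul0r.
  by under eq_bigr do rewrite mulrN mulrA; rewrite sumrN -mulr_suml hc mul0r oppr0.
- under eq_bigr => x _ do rewrite (scE (k x)) bl10.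
  rewrite sumC; congr Complex.
    by under eq_bigr do rewrite mulrA; rewrite -mulr_suml hc mul0r.
  by under eq_bigr do rewrite mulrA; rewrite -mulr_suml hc mul0r.
- under eq_bigr => x _ do rewrite (scE (k x)) bl11.
  rewrite sumC; congr Complex; last by rewrite big1 // => x _; rewrite mulr0.
  under eq_bigr do rewrite mulrA mulrBr mulr1 mulrBl.
  by rewrite sumrB hk2 -mulr_suml hc mul0r subr0.
Qed.
End Fin.

Unset Implicit Arguments.
Theorem lemma7 (R : realType) (N : nat) (hN : (0 < N)%N)
  (v : 'I_N -> 'rV[R]_3) (hv : forall x, enorm (v x) <= 1) :
  is_Pguess v (N%:R^-1 + ratio_r v).
Proof.
have [mu [c [Rr [mu0 mu1 cE hle heq]]]] := @meb R N v hN.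
pose x0 := Ordinal hN.
have Rr0 : 0 <= Rr := le_trans (enorm_ge0 _) (hle x0).
pose n x := Rr^-1 *: (v x - c).
have hn x : enorm (n x) <= 1.
  rewrite /n enormZ ger0_norm ?invr_ge0 //.
  case: (eqVneq Rr 0) => [->|nz]; first by rewrite invr0 mul0r ler01.
  rewrite -(mulVf nz); apply: ler_wpM2l; [by rewrite invr_ge0 | exact: hle].
have sumn : \sum_x mu x *: n x = 0.
  under eq_bigr do rewrite /n scalerA mulrC -scalerA.
  rewrite -scaler_sumr; under eq_bigr do rewrite scalerBr.
  by rewrite sumrB -scaler_suml mu1 scale1r -cE subrr scaler0.
have keysum : \sum_x mu x * dot (n x) (v x) = Rr.
  have -> : \sum_x mu x * dot (n x) (v x) =
      \sum_x mu x * (Rr^-1 * dot (v x - c) (v x - c)) + dot (\sum_x mu x *: n x) c.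
    rewrite dot_suml -big_split /=; apply: eq_bigr => x _.
    by rewrite /n !dotZl (dotBr (v x - c) (v x) c); ring.
  rewrite sumn dot0l addr0.
  have -> : \sum_x mu x * (Rr^-1 * dot (v x - c) (v x - c)) = \sum_x mu x * (Rr^-1 * Rr ^+ 2).
    apply: eq_bigr => x _; case: (ltrP 0 (mu x)) => hm.
      by rewrite -enorm_sq heq.
    have -> : mu x = 0 by apply/eqP; rewrite eq_le hm mu0.
    by rewrite !mul0r.
  rewrite -mulr_suml mu1 mul1r.
  case: (eqVneq Rr 0) => [->|nz]; first by rewrite invr0 mul0r.
  by rewrite expr2 mulKf.
pose Mst x := RtoC (2 * mu x) *: bloch_state (n x).
have mu2 x : 0 <= 2 * mu x by apply: mulr_ge0 => //; exact: mu0.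
have povmst : povm Mst.
  split; first by move=> x; apply: psd_bloch => //; exact: hn.
  apply: sum_bloch; first by rewrite -mulr_sumr mu1 mulr1.
  under eq_bigr do rewrite -scalerA.
  by rewrite -scaler_sumr sumn scaler0.
have hermst x : adjmx (Mst x) = Mst x by case: (psd_facts (povmst.1 x)).
have succst : success Mst v = RtoC (N%:R^-1 * (1 + Rr)).
  rewrite success_eq //; congr (RtoC (_ * _)).
  under eq_bigr do rewrite /Mst mm_bloch av_bloch dotZl.
  have -> : \sum_x (2 * mu x + 2 * mu x * dot (n x) (v x)) / 2 =
            \sum_x mu x + \sum_x mu x * dot (n x) (v x).
    by rewrite -big_split; apply: eq_bigr => x _ /=; field; rewrite ?pnatr_eq0.
  by rewrite mu1 keysum.
have upper : forall M, povm M -> success M v <= RtoC (N%:R^-1 * (1 + Rr)).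
  move=> M hM.
  have hM' x := psd_facts (hM.1 x).
  have [sm sa] := povm_sums hM.
  rewrite success_eq; last by move=> x; case: (hM' x).
  rewrite /RtoC lecR; apply: ler_wpM2l; first by rewrite invr_ge0 ler0n.
  have hd : \sum_x dot (av (M x)) (v x) <= 2 * Rr.
    have -> : \sum_x dot (av (M x)) (v x) = \sum_x dot (av (M x)) (v x - c).
      under [RHS]eq_bigr do rewrite dotBr.
      by rewrite sumrB -dot_suml sa dot0l subr0.
    rewrite -sm mulr_suml; apply: ler_sum => x _.
    apply: (le_trans (CS _ _)); case: (hM' x) => _ h0 h1.
    by apply: ler_pM; [exact: enorm_ge0 | exact: enorm_ge0 | exact: h1 | exact: hle].
  rewrite -mulr_suml big_split /= sm; lra.
have fitb : forall l, fit_scales v l -> l * Rr <= 1.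
  move=> l [l0 [g [hg hfit]]].
  have := iso_bound hg hfit (m := fun x => 2 * mu x) (a := fun x => (2 * mu x) *: n x).
  have ha x : enorm ((2 * mu x) *: n x) <= 2 * mu x.
    rewrite enormZ ger0_norm //; rewrite -[leRHS]mulr1; apply: ler_wpM2l => //; exact: hn.
  have hm : \sum_x 2 * mu x = 2 by rewrite -mulr_sumr mu1 mulr1.
  have hsa : \sum_x (2 * mu x) *: n x = 0.
    by under eq_bigr do rewrite -scalerA; rewrite -scaler_sumr sumn scaler0.
  move=> /(_ ha hm hsa).
  have -> : \sum_x dot ((2 * mu x) *: n x) (l *: v x) = 2 * l * Rr.
    rewrite -keysum mulr_sumr; apply: eq_bigr => x _; rewrite dotZl dotZr; ring.
  move=> h; nra.
have ratioE : ratio_r v = N%:R^-1 * Rr.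
  case: (eqVneq Rr 0) => [R0|nz].
    have hbig : forall l, 0 <= l -> (l%:E <= lambda_star v)%E.
      move=> l l0; apply: ereal_sup_ubound; exists l => //; split => //.
      exists (fun z => z - l *: c); split.
        by move=> a b; rewrite opprB addrA subrK.
      move=> x; rewrite -scalerBr enormZ.
      have := hle x; rewrite R0 => h.
      have := enorm_ge0 (v x - c) => h'.
      have -> : enorm (v x - c) = 0 by apply/eqP; rewrite eq_le h h'.
      by rewrite mulr0 ler01.
    have Linf : lambda_star v = +oo%E.
      move: hbig; case: (lambda_star v) => [l| |] // hb.
        have := hb (`|l| + 1) (addr_ge0 (normr_ge0 _) ler01); rewrite lee_fin => h1.
        exfalso; have := ler_norm l; lra.
      by have := hb 0 (lexx 0).
    by rewrite /ratio_r Linf R0 mulr0.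
  have Rpos : 0 < Rr by rewrite lt_def nz Rr0.
  have LE : lambda_star v = (Rr^-1)%:E.
    apply/eqP; rewrite eq_le; apply/andP; split.
      apply: ge_ereal_sup => y [l hl <-]; rewrite lee_fin.
      by rewrite -[Rr^-1]mul1r ler_pdivlMr //; exact: fitb.
    apply: ereal_sup_ubound; exists (Rr^-1) => //; split; first by rewrite invr_ge0.
    exists (fun z => z - Rr^-1 *: c); split.
      by move=> a b; rewrite opprB addrA subrK.
    by move=> x; rewrite -scalerBr; exact: hn.
  by rewrite /ratio_r LE invfM invrK.
have PE : N%:R^-1 + ratio_r v = N%:R^-1 * (1 + Rr) by rewrite ratioE mulrDr mulr1.
rewrite PE; split; first by exists Mst.
exact: upper.
Qed.
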